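(* Let $(H,\alpha_H)$ be an object of $\overline{\mathcal H}^{i,j}(Vec_\Bbbk)$ and let $\Delta_H:H\to H\otimes H$ (written $h\mapsto h_1\otimes h_2$) and $\varepsilon_H:H\to\Bbbk$ be morphisms in $\overline{\mathcal H}^{i,j}(Vec_\Bbbk)$. Consider the functor $\ddot H=-\otimes H$ on $\overline{\mathcal H}^{i,j}(Vec_\Bbbk)$, $(X,\alpha_X)\mapsto(X\otimes H,\alpha_X\otimes\alpha_H)$, with natural transformations $\delta_X:X\otimes H\to(X\otimes H)\otimes H$, $x\otimes h\mapsto(\alpha_X(x)\otimes h_1)\otimes\alpha_H^{-1}(h_2)$, and $\epsilon_X:X\otimes H\to X$, $x\otimes h\mapsto\varepsilon_H(h)\alpha_X^{-1}(x)$. Then $(\ddot H,\delta,\epsilon)$ is a comonad on $\overline{\mathcal H}^{i,j}(Vec_\Bbbk)$ if and only if $(H,\alpha_H,\Delta_H,\varepsilon_H)$ is a Hom-coalgebra. Moreover, the category of right $H$-Hom-comodules coincides with the category of $\ddot H$-comodules in $\overline{\mathcal H}^{i,j}(Vec_\Bbbk)$.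
   Context: $\Bbbk$ is a field of characteristic $0$; all vector spaces are finite-dimensional; $i,j$ are fixed integers. $\overline{\mathcal H}^{i,j}(Vec_\Bbbk)$ is the monoidal category whose objects are pairs $(X,\alpha_X)$ with $X$ a finite-dimensional $\Bbbk$-space and $\alpha_X$ a linear automorphism of $X$; morphisms $f:(X,\alpha_X)\to(Y,\alpha_Y)$ are linear maps with $\alpha_Y\circ f=f\circ\alpha_X$; $(X,\alpha_X)\otimes(Y,\alpha_Y)=(X\otimes Y,\alpha_X\otimes\alpha_Y)$, unit $(\Bbbk,\mathrm{id})$; associativity $a_{X,Y,Z}((x\otimes y)\otimes z)=\alpha_X^{i+1}(x)\otimes(y\otimes\alpha_Z^{-j-1}(z))$; unit constraints $l_X(\lambda\otimes x)=\lambda\alpha_X^{j+1}(x)$, $r_X(x\otimes\lambda)=\lambda\alpha_X^{i+1}(x)$. A Hom-coalgebra $(C,\alpha,\Delta,\varepsilon)$: $\varepsilon\circ\alpha=\varepsilon$, $\alpha(c_1)\otimes\Delta(c_2)=\Delta(c_1)\otimes\alpha(c_2)$, $\varepsilon(c_1)c_2=c_1\varepsilon(c_2)=\alpha(c)$. A right $H$-Hom-comodule is $(M,\alpha_M,\rho^M)$, $(M,\alpha_M)$ an object of $\overline{\mathcal H}^{i,j}(Vec_\Bbbk)$, $\rho^M:M\to M\otimes H$, $m\mapsto m_0\otimes m_1$, a morphism there, with $\alpha_M(m_0)\otimes\Delta(m_1)=\rho^M(m_0)\otimes\alpha_H(m_1)$ and $\varepsilon(m_1)m_0=\alpha_M(m)$;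 morphisms are colinear maps commuting with the $\alpha$'s. A comonad on a category: endofunctor $F$, natural $\Delta:F\to FF$, $\varepsilon:F\to\mathrm{id}$ with $F\Delta\circ\Delta=\Delta F\circ\Delta$, $F\varepsilon\circ\Delta=\varepsilon F\circ\Delta=\mathrm{id}$; a comodule is $(X,\rho)$, $\rho:X\to FX$, $F\rho\circ\rho=\Delta_X\circ\rho$, $\varepsilon_X\circ\rho=\mathrm{id}_X$. *)

(* Defs.v *)
(* Model of the category \overline{H}^{i,j}(Vec_k):
   a finite-dimensional k-space is represented (up to isomorphism) by k^n,
   i.e. row vectors 'rV[K]_n; a linear map k^n -> k^m is a matrix
   f : 'M[K]_(n,m) acting on the right, x |-> x *m f, so that the
   composite "g o f" is  f *m g.  The tensor product k^n (x) k^m is k^(n*m)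
   with the Kronecker product (tensmx, notation  *t , from mathcomp's mxtens,
   lexicographic index  i*m + j), so (x (x) y) *m (f *t g) = (x f) (x) (y g).
   With that convention the canonical vector-space identification
   X (x) (Y (x) Z) = (X (x) Y) (x) Z is the cast along  mulnA. *)
From HB Require Import structures.
From mathcomp Require Import all_boot all_order all_algebra.
From mathcomp Require Export mxtens.
Set Implicit Arguments.
Unset Strict Implicit.
Unset Printing Implicit Defensive.
Import GRing.Theory.
Local Open Scope ring_scope.

Section HomCat.
Variable K : fieldType.

Lemma tensmx_unit_any m n (A : 'M[K]_m) (B : 'M[K]_n) :
  A \in unitmx -> B \in unitmx -> (A *t B) \in unitmx.
Proof.
case: m A => [|m] A; case: n B => [|n] B uA uB.
- move: (A *t B); rewrite mul0n => C; by rewrite unitmxE det_mx00 unitr1.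
- move: (A *t B); rewrite mul0n => C; by rewrite unitmxE det_mx00 unitr1.
- move: (A *t B); rewrite muln0 => C; by rewrite unitmxE det_mx00 unitr1.
- by apply: tensmx_unit.
Qed.

Record obj := Obj {
  odim : nat;
  oalpha : 'M[K]_odim;
  oalpha_unit : oalpha \in unitmx }.

Definition is_mor (X Y : obj) (f : 'M[K]_(odim X, odim Y)) : Prop :=
  oalpha X *m f = f *m oalpha Y.

Definition tens_obj (X Y : obj) : obj :=
  Obj (tensmx_unit_any (oalpha_unit X) (oalpha_unit Y)).

Definition unit_obj : obj := @Obj 1 1%:M (unitmx1 _ _).

Section Comonad.
Variables (H : obj) (Delta : 'M[K]_(odim H, odim H * odim H))
          (eps : 'M[K]_(odim H, 1)).

Definition Hdd (X : obj) : obj := tens_obj X H.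
Definition Hdd_mor (X Y : obj) (f : 'M[K]_(odim X, odim Y)) :
  'M[K]_(odim (Hdd X), odim (Hdd Y)) := f *t (1%:M : 'M[K]_(odim H)).

Definition delta (X : obj) : 'M[K]_(odim (Hdd X), odim (Hdd (Hdd X))) :=
  castmx (erefl _, mulnA _ _ _)
    (oalpha X *t (Delta *m ((1%:M : 'M[K]_(odim H)) *t invmx (oalpha H)))).

Definition epsC (X : obj) : 'M[K]_(odim (Hdd X), odim X) :=
  castmx (erefl _, muln1 _) (invmx (oalpha X) *t eps).

Definition is_comonad : Prop :=
  (forall X, is_mor (delta X)) /\
  (forall X, is_mor (epsC X)) /\
  (forall X Y (f : 'M[K]_(odim X, odim Y)), is_mor f ->
        delta X *m Hdd_mor (Hdd_mor f) = Hdd_mor f *m delta Y) /\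
  (forall X Y (f : 'M[K]_(odim X, odim Y)), is_mor f ->
        epsC X *m f = Hdd_mor f *m epsC Y) /\
  (forall X, delta X *m Hdd_mor (delta X) = delta X *m delta (Hdd X)) /\
  (forall X, delta X *m Hdd_mor (epsC X) = 1%:M) /\
  (forall X, delta X *m epsC (Hdd X) = 1%:M).

Definition is_hom_coalgebra : Prop :=
  [/\
      oalpha H *m eps = eps,
      (* alpha(c_1) (x) Delta(c_2) = Delta(c_1) (x) alpha(c_2) *)
      castmx (erefl _, mulnA _ _ _) (Delta *m (oalpha H *t Delta))
        = Delta *m (Delta *t oalpha H),
      castmx (erefl _, mul1n _) (Delta *m (eps *t 1%:M)) = oalpha H &
      castmx (erefl _, muln1 _) (Delta *m (1%:M *t eps)) = oalpha H].

Definition is_hom_comodule (M : obj) (rho : 'M[K]_(odim M, odim M * odim H))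
  : Prop :=
  [/\ @is_mor M (tens_obj M H) rho,
      (* alpha_M(m_0) (x) Delta(m_1) = rho(m_0) (x) alpha_H(m_1) *)
      castmx (erefl _, mulnA _ _ _) (rho *m (oalpha M *t Delta))
        = rho *m (rho *t oalpha H) &
      castmx (erefl _, muln1 _) (rho *m (1%:M *t eps)) = oalpha M].

Definition hom_comodule_mor (M N : obj)
  (rhoM : 'M[K]_(odim M, odim M * odim H)) (rhoN : 'M[K]_(odim N, odim N * odim H))
  (f : 'M[K]_(odim M, odim N)) : Prop :=
  is_mor f /\ f *m rhoN = rhoM *m (f *t 1%:M).

Definition is_comonad_comodule (M : obj) (rho : 'M[K]_(odim M, odim (Hdd M)))
  : Prop :=
  [/\ @is_mor M (Hdd M) rho,
      rho *m Hdd_mor rho = rho *m delta M &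
      rho *m epsC M = 1%:M].

Definition comonad_comodule_mor (M N : obj)
  (rhoM : 'M[K]_(odim M, odim (Hdd M))) (rhoN : 'M[K]_(odim N, odim (Hdd N)))
  (f : 'M[K]_(odim M, odim N)) : Prop :=
  is_mor f /\ rhoM *m Hdd_mor f = f *m rhoN.

End Comonad.
End HomCat.

(* Main.v *)
Require Import Defs.
From HB Require Import structures.
From mathcomp Require Import all_boot all_order all_algebra.
From mathcomp Require Import mxtens.
Import GRing.Theory.
Local Open Scope ring_scope.

Section H.
Variable K : fieldType.

Lemma mxtens_index_inj m n : injective (@mxtens_index m n).
Proof. exact: can_inj (@mxtens_indexK m n). Qed.

Lemma tens11 m n : (1%:M : 'M[K]_m) *t (1%:M : 'M[K]_n) = 1%:M.
Proof.
apply/matrixP=> i j.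
case: (mxtens_indexP i)=> i1 i2; case: (mxtens_indexP j)=> j1 j2.
rewrite tensmxE !mxE (inj_eq (@mxtens_index_inj m n)) xpair_eqE.
by case: (i1 == j1); case: (i2 == j2); rewrite /= ?mulr1 ?mul0r ?mulr0.
Qed.

Lemma tensmxA m n p q r s (A : 'M[K]_(m,n)) (B : 'M[K]_(p,q)) (C : 'M[K]_(r,s)) :
  (A *t B) *t C = castmx (mulnA m p r, mulnA n q s) (A *t (B *t C)).
Proof.
apply/matrixP=> i j; rewrite castmxE.
case: (mxtens_indexP i)=> i1 i2; case: (mxtens_indexP i1)=> i11 i12.
case: (mxtens_indexP j)=> j1 j2; case: (mxtens_indexP j1)=> j11 j12.
have -> : cast_ord (esym (mulnA m p r)) (mxtens_index (mxtens_index (i11, i12), i2))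
   = mxtens_index (i11, mxtens_index (i12, i2)).
  by apply: val_inj => /=; rewrite mulnDl -mulnA addnA.
have -> : cast_ord (esym (mulnA n q s)) (mxtens_index (mxtens_index (j11, j12), j2))
   = mxtens_index (j11, mxtens_index (j12, j2)).
  by apply: val_inj => /=; rewrite mulnDl -mulnA addnA.
by rewrite !tensmxE mulrA.
Qed.

Lemma castT_l m m' n n' p q (e1 : m = m') (e2 : n = n') (A : 'M[K]_(m,n)) (B : 'M[K]_(p,q)) :
  castmx (e1, e2) A *t B = castmx (congr1 (muln^~ p) e1, congr1 (muln^~ q) e2) (A *t B).
Proof. by case: m' / e1; case: n' / e2; rewrite !castmx_id. Qed.

Lemma castT_r m n p p' q q' (e1 : p = p') (e2 : q = q') (A : 'M[K]_(m,n)) (B : 'M[K]_(p,q)) :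
  A *t castmx (e1, e2) B = castmx (congr1 (muln m) e1, congr1 (muln n) e2) (A *t B).
Proof. by case: p' / e1; case: q' / e2; rewrite !castmx_id. Qed.

Lemma cast_mul m m' n n' p p' (e1 : m = m') (e e' : n = n') (e2 : p = p')
  (A : 'M[K]_(m,n)) (B : 'M[K]_(n,p)) :
  castmx (e1, e) A *m castmx (e', e2) B = castmx (e1, e2) (A *m B).
Proof. by rewrite (eq_irrelevance e' e); clear e'; case: m' / e1; case: n' / e; case: p' / e2; rewrite !castmx_id. Qed.

Lemma mul_castr m n p p' (e : p = p') (A : 'M[K]_(m,n)) (B : 'M[K]_(n,p)) :
  A *m castmx (erefl, e) B = castmx (erefl, e) (A *m B).
Proof. by case: p' / e; rewrite !castmx_id. Qed.

Lemma cast_mull m n n' p (e : n = n') (A : 'M[K]_(m,n)) (B : 'M[K]_(n',p)) :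
  castmx (erefl, e) A *m B = A *m castmx (esym e, erefl) B.
Proof. by case: n' / e in B *; rewrite !castmx_id. Qed.

Lemma castmx_inj m n m' n' (e e' : (m = m') * (n = n')) (A B : 'M[K]_(m,n)) :
  castmx e A = castmx e' B -> A = B.
Proof.
case: e e' => e1 e2 [e1' e2']; rewrite (eq_irrelevance e1' e1) (eq_irrelevance e2' e2).
move=> h; rewrite -(castmxK e1 e2 A) h castmxK //.
Qed.

Lemma castmx_irr m n m' n' (e e' : (m = m') * (n = n')) (A : 'M[K]_(m,n)) :
  castmx e A = castmx e' A.
Proof. exact: eq_castmx. Qed.

Lemma tens1l n p (A : 'M[K]_(n,p)) : (1%:M : 'M[K]_1) *t A = castmx (esym (mul1n _), esym (mul1n _)) A.
Proof. exact: tens_scalar1mx. Qed.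

Lemma tens1r n p (A : 'M[K]_(n,p)) : A *t (1%:M : 'M[K]_1) = castmx (esym (muln1 _), esym (muln1 _)) A.
Proof. by rewrite tens_mx_scalar scale1r. Qed.

Lemma invmx_tens m n (a : 'M[K]_m) (b : 'M[K]_n) : a \in unitmx -> b \in unitmx ->
  invmx (a *t b) = invmx a *t invmx b.
Proof.
move=> ua ub; have u := tensmx_unit_any ua ub.
rewrite -[RHS]mul1mx -(mulVmx u) -mulmxA tensmx_mul !mulmxV // tens11 mulmx1 //.
Qed.

Lemma inv_comm m n (a : 'M[K]_m) (b : 'M[K]_n) (f : 'M[K]_(m,n)) :
  a \in unitmx -> b \in unitmx -> a *m f = f *m b -> invmx a *m f = f *m invmx b.
Proof.
move=> ua ub h.
by rewrite -[LHS]mulmx1 -(mulmxV ub) mulmxA -(mulmxA _ f) -h mulmxA mulVmx // mul1mx.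
Qed.

Lemma mul_cast_gen m n n' p p' (e1 : n = n') (e2 : p = p') (A : 'M[K]_(m,n')) (B : 'M[K]_(n,p)) :
  A *m castmx (e1, e2) B = castmx (erefl, e2) (castmx (erefl, esym e1) A *m B).
Proof. by case: n' / e1 in A *; case: p' / e2; rewrite !castmx_id. Qed.

Lemma cast_swap m n m' n' m'' n'' (e : (m = m') * (n = n')) (e' : (m'' = m') * (n'' = n'))
  (e'' : (m'' = m) * (n'' = n)) (A : 'M[K]_(m,n)) (B : 'M[K]_(m'',n'')) :
  castmx e A = castmx e' B <-> A = castmx e'' B.
Proof.
case: e e' e'' => [e1 e2] [e1' e2'] [e1'' e2'']; split=> hh.
  apply: (@castmx_inj _ _ _ _ (e1, e2) (e1, e2)); rewrite hh castmx_comp; exact: eq_castmx.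
by rewrite hh castmx_comp; apply: eq_castmx.
Qed.

Lemma castKK m n n' (e e' : n = n') (Z : 'M[K]_(m,n')) :
  castmx (erefl, e) (castmx (erefl, esym e') Z) = Z.
Proof. by rewrite castmx_comp castmx_id. Qed.

Lemma castR1 k n p (M : 'M[K]_(k, n * 1)) (c : 'M[K]_(n, p)) :
  castmx (erefl, muln1 n) M *m c = castmx (erefl, muln1 p) (M *m (c *t 1%:M)).
Proof.
rewrite tens1r mul_cast_gen castmx_comp castmx_id; congr (_ *m _); exact: eq_castmx.
Qed.

Lemma castL1 k n p (M : 'M[K]_(k, 1 * n)) (c : 'M[K]_(n, p)) :
  castmx (erefl, mul1n n) M *m c = castmx (erefl, mul1n p) (M *m (1%:M *t c)).
Proof.
rewrite tens1l mul_cast_gen castmx_comp castmx_id; congr (_ *m _); exact: eq_castmx.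
Qed.

Section Main.
Variables (H : obj K) (D : 'M[K]_(odim H, odim H * odim H)) (e : 'M[K]_(odim H, 1)).
Hypothesis hD : @is_mor K H (tens_obj H H) D.
Hypothesis he : @is_mor K H (unit_obj K) e.
Local Notation h := (odim H).
Local Notation b := (oalpha H).
Local Notation bi := (invmx (oalpha H)).
Let ub : b \in unitmx := oalpha_unit H.
Let E := D *m ((1%:M : 'M[K]_h) *t bi).

Lemma F1 : b *m D = D *m (b *t b).
Proof. exact: hD. Qed.
Lemma F1i : bi *m D = D *m (bi *t bi).
Proof. rewrite -invmx_tens //; apply: inv_comm; [exact: ub | exact: tensmx_unit_any ub ub | exact: F1]. Qed.
Lemma F2 : b *m e = e.
Proof. by have := he; rewrite /is_mor /= mulmx1. Qed.
Lemma bbi : b *m bi = 1%:M. Proof. exact: mulmxV. Qed.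
Lemma bib : bi *m b = 1%:M. Proof. exact: mulVmx. Qed.

Lemma FE : b *m E = E *m (b *t b).
Proof.
by rewrite /E mulmxA F1 -!mulmxA !tensmx_mul !mul1mx mulmx1 bbi bib.
Qed.

Lemma delta_mor X : is_mor (delta D X).
Proof. by rewrite /is_mor /delta /= mul_castr tensmxA cast_mul !tensmx_mul -FE. Qed.

Lemma eps_mor X : is_mor (epsC e X).
Proof.
have ua := oalpha_unit X.
rewrite /is_mor /epsC /= mul_castr tensmx_mul mulmxV // F2.
by rewrite castR1 tensmx_mul mulVmx // mulmx1.
Qed.

Lemma nat_delta X Y (f : 'M[K]_(odim X, odim Y)) : is_mor f ->
  delta D X *m Hdd_mor H (Hdd_mor H f) = Hdd_mor H f *m delta D Y.
Proof.
move=> hf; rewrite /Hdd_mor /delta /= tensmxA tens11 cast_mul mul_castr !tensmx_mul.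
by rewrite hf mulmx1 mul1mx.
Qed.

Lemma nat_eps X Y (f : 'M[K]_(odim X, odim Y)) : is_mor f ->
  epsC e X *m f = Hdd_mor H f *m epsC e Y.
Proof.
move=> hf; rewrite /Hdd_mor /epsC /= castR1 mul_castr !tensmx_mul.
by rewrite (@inv_comm _ _ _ _ _ (oalpha_unit X) (oalpha_unit Y) hf) mulmx1 mul1mx.
Qed.

Let I := (1%:M : 'M[K]_h).
Let P := E *m (E *t I).
Let Qp := castmx (erefl, mulnA h h h) (E *m (b *t E)).
Let W := (I *t bi) *t (bi *m bi).

Lemma P_eq : P = D *m (D *t b) *m W.
Proof.
have e1 : (D *m (I *t bi)) *t I = (D *t I) *m ((I *t bi) *t I) by rewrite tensmx_mul mulmx1.
have e2 : (I *t bi) *m (D *t I) = (D *t I) *m (1%:M *t bi) by rewrite !tensmx_mul !mul1mx !mulmx1.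
have e3 : (D *t b) = (D *t I) *m (1%:M *t b) by rewrite !tensmx_mul !mul1mx !mulmx1.
rewrite /P /E e1 e3 /W !mulmxA -(mulmxA D (I *t bi)) e2 !mulmxA.
rewrite -!mulmxA; congr (_ *m (_ *m _)).
by rewrite !tensmx_mul !mul1mx mulmx1 mulmxA bbi mul1mx.
Qed.

Lemma Q_eq : Qp = castmx (erefl, mulnA h h h) (D *m (b *t D)) *m W.
Proof.
have f1 : b *t (D *m (I *t bi)) = (b *t D) *m (I *t (I *t bi)) by rewrite tensmx_mul mulmx1.
have f2 : (I *t bi) *m (b *t D) = (b *t D) *m (I *t (bi *t bi)).
  by rewrite !tensmx_mul F1i mul1mx mulmx1.
rewrite /W tensmxA cast_mul /Qp /E f1 mulmxA -(mulmxA D) f2 -!mulmxA.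
rewrite (tensmx_mul I (bi *t bi) I (I *t bi)) (tensmx_mul bi bi I bi) /I mul1mx mulmx1. by [].
Qed.

Lemma W_inv : W *m ((I *t b) *t (b *m b)) = 1%:M.
Proof.
rewrite /W !tensmx_mul mulmx1 bib mulmxA -(mulmxA bi) bib mulmx1 bib.
by rewrite tens11 tens11.
Qed.

Lemma PQ_iff : P = Qp <-> castmx (erefl, mulnA h h h) (D *m (b *t D)) = D *m (D *t b).
Proof.
rewrite P_eq Q_eq; split=> hh; last by rewrite hh.
by rewrite -[LHS]mulmx1 -W_inv mulmxA -hh -mulmxA W_inv mulmx1.
Qed.

Lemma coassoc_iff X :
  delta D X *m Hdd_mor H (delta D X) = delta D X *m delta D (Hdd H X) <->
  (oalpha X *m oalpha X) *t P = (oalpha X *m oalpha X) *t Qp.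
Proof.
rewrite /Hdd_mor /delta /= castT_l !tensmxA !castmx_comp !cast_mul !tensmx_mul.
rewrite /Qp castT_r /P /I.
exact: cast_swap.
Qed.

Lemma Lcounit_iff X :
  delta D X *m Hdd_mor H (epsC e X) = 1%:M <->
  (1%:M : 'M[K]_(odim X)) *t (castmx (erefl, mul1n h) (D *m (e *t I)) *m bi) = 1%:M.
Proof.
have ua := oalpha_unit X.
have G0 : E *m (e *t 1%:M) = castmx (erefl, esym (mul1n h)) (castmx (erefl, mul1n h) (D *m (e *t I)) *m bi).
  by rewrite castL1 castmx_comp castmx_id /E -!mulmxA !tensmx_mul !mulmx1 !mul1mx.
rewrite /Hdd_mor /delta /epsC /= castT_l tensmxA castmx_comp cast_mul tensmx_mul mulmxV //.
by rewrite G0 castT_r castmx_comp castmx_id.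
Qed.

Lemma Rcounit_iff X :
  delta D X *m epsC e (Hdd H X) = 1%:M <->
  (1%:M : 'M[K]_(odim X)) *t (castmx (erefl, muln1 h) (D *m (I *t e)) *m bi) = 1%:M.
Proof.
have ua := oalpha_unit X.
have bie : bi *m e = e by rewrite -{1}F2 mulmxA bib mul1mx.
have G0 : E *m (bi *t e) = castmx (erefl, esym (muln1 h)) (castmx (erefl, muln1 h) (D *m (I *t e)) *m bi).
  by rewrite castR1 castmx_comp castmx_id /E -!mulmxA !tensmx_mul !mulmx1 !mul1mx bie.
rewrite /Hdd_mor /delta /epsC /= invmx_tens // tensmxA castmx_comp cast_mul tensmx_mul mulmxV //.
by rewrite G0 castT_r castmx_comp castmx_id.
Qed.

Lemma comod_coassoc_iff M (rho : 'M[K]_(odim M, odim M * h)) :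
  castmx (erefl, mulnA _ _ _) (rho *m (oalpha M *t D)) = rho *m (rho *t b) <->
  rho *m @Hdd_mor K H M (Hdd H M) rho = rho *m delta D M.
Proof.
have hY : rho *m delta D M =
   castmx (erefl, mulnA _ _ _) (rho *m (oalpha M *t D)) *m (1%:M *t bi).
  rewrite -tens11 tensmxA cast_mul /delta mul_castr /E.
  by rewrite -mulmxA tensmx_mul mulmx1.
have hr : rho *m (rho *t b) = rho *m (rho *t 1%:M) *m (1%:M *t b).
  by rewrite -mulmxA tensmx_mul mulmx1 mul1mx.
rewrite /Hdd_mor; split=> hh.
  by rewrite hY hh hr -!mulmxA tensmx_mul mulmx1 bbi tens11 mulmx1.
by rewrite hr hh hY -!mulmxA tensmx_mul mulmx1 bib tens11 mulmx1.
Qed.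

Lemma comod_counit_iff M (rho : 'M[K]_(odim M, odim M * h)) :
  castmx (erefl, muln1 _) (rho *m (1%:M *t e)) = oalpha M <->
  rho *m epsC e M = 1%:M.
Proof.
have ua := oalpha_unit M.
have hZ : rho *m epsC e M = castmx (erefl, muln1 _) (rho *m (1%:M *t e)) *m invmx (oalpha M).
  by rewrite castR1 /epsC mul_castr -mulmxA tensmx_mul mul1mx mulmx1.
rewrite hZ; split=> hh; first by rewrite hh mulmxV.
by rewrite -[LHS]mulmx1 -[X in _ *m X](mulVmx ua) mulmxA hh mul1mx.
Qed.

Lemma unit_tens (A : 'M[K]_h) : (1%:M : 'M[K]_1) *t A = 1%:M -> A = 1%:M.
Proof. by rewrite -(tens11 1 h) !tens1l => /castmx_inj. Qed.

Lemma inv_cancel (L : 'M[K]_h) : L *m bi = 1%:M -> L = b.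
Proof. by move=> hh; rewrite -[L]mulmx1 -[X in _ *m X](mulVmx ub) mulmxA hh mul1mx. Qed.

Lemma main_res :
  (is_comonad D e <-> is_hom_coalgebra D e) /\
  (is_hom_coalgebra D e ->
     (forall (M : obj K) (rho : 'M[K]_(odim M, odim M * odim H)),
        is_hom_comodule D e rho <-> is_comonad_comodule D e rho) /\
   (forall (M N : obj K) (rhoM : 'M[K]_(odim M, odim M * odim H))
             (rhoN : 'M[K]_(odim N, odim N * odim H))
             (f : 'M[K]_(odim M, odim N)),
        is_hom_comodule D e rhoM -> is_hom_comodule D e rhoN ->
        (hom_comodule_mor rhoM rhoN f <-> comonad_comodule_mor rhoM rhoN f))).
Proof.
split.
  split.
    case=> [_ [_ [_ [_ [ca [lc rc]]]]]].
    split.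
    - exact: F2.
    - apply/PQ_iff.
      have := (coassoc_iff (unit_obj K)).1 (ca (unit_obj K)).
      by rewrite /= mulmx1 !tens1l => /castmx_inj.
    - apply: inv_cancel; apply: unit_tens.
      exact: ((Lcounit_iff (unit_obj K)).1 (lc (unit_obj K))).
    - apply: inv_cancel; apply: unit_tens.
      exact: ((Rcounit_iff (unit_obj K)).1 (rc (unit_obj K))).
  case=> c1 c2 c3 c4.
  split; first exact: delta_mor.
  split; first exact: eps_mor.
  split; first exact: nat_delta.
  split; first exact: nat_eps.
  split.
    move=> X; apply/coassoc_iff.
    have -> : P = Qp by apply/PQ_iff.
    by [].
  split.
    by move=> X; apply/Lcounit_iff; rewrite c3 mulmxV // tens11.
  by move=> X; apply/Rcounit_iff; rewrite c4 mulmxV // tens11.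
move=> hc; split.
  move=> M rho; split; case=> h1 h2 h3; split.
  - exact: h1.
  - exact/comod_coassoc_iff.
  - exact/comod_counit_iff.
  - exact: h1.
  - exact/comod_coassoc_iff.
  - exact/comod_counit_iff.
move=> M N rhoM rhoN f _ _; rewrite /hom_comodule_mor /comonad_comodule_mor /Hdd_mor.
by split; case=> h1 h2; split=> //; rewrite h2.
Qed.
End Main.
End H.

Theorem lemma4p1 (K : fieldType) (char0 : [pchar K] =i pred0)
  (H : obj K) (Delta : 'M[K]_(odim H, odim H * odim H))
  (eps : 'M[K]_(odim H, 1))
  (hDelta : @is_mor K H (tens_obj H H) Delta)
  (heps : @is_mor K H (unit_obj K) eps) :
  (is_comonad Delta eps <-> is_hom_coalgebra Delta eps) /\
  (is_hom_coalgebra Delta eps ->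
     (forall (M : obj K) (rho : 'M[K]_(odim M, odim M * odim H)),
        is_hom_comodule Delta eps rho <-> is_comonad_comodule Delta eps rho) /\
     (forall (M N : obj K) (rhoM : 'M[K]_(odim M, odim M * odim H))
             (rhoN : 'M[K]_(odim N, odim N * odim H))
             (f : 'M[K]_(odim M, odim N)),
        is_hom_comodule Delta eps rhoM -> is_hom_comodule Delta eps rhoN ->
        (hom_comodule_mor rhoM rhoN f <-> comonad_comodule_mor rhoM rhoN f))).
Proof. exact: (@main_res K H Delta eps hDelta heps). Qed.
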